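(* Consider testing $H_0^G:G\sim\mathcal G_d(N,1/2)$ versus $H_1^G:G\sim\mathcal G_d(N,1/2,\kappa)$ with $\kappa=N^\beta$, $0<\beta<1/2$, $d$ fixed. Let $C>0$ be a constant and let $f$ be a polynomial in the hyperedge indicator variables $(\mathcal A_e)_{e\in\binom{[N]}{d}}$ of $G$, of degree at most $D$ with $D\le C\log N$, such that $\mathbb E_{H_0^G}f(G)=0$ and $\mathbb E_{H_0^G}f(G)^2=1$. Then $\mathbb E_{H_1^G}f(G)=O(1)$, i.e. it is bounded by a constant not depending on $N$ or $f$.
   Context: $\mathcal G_d(N,1/2)$ is the random $d$-uniform hypergraph on $[N]$ where each $d$-element subset $e$ is a hyperedge independently with probability $1/2$; $\mathcal A_e\in\{0,1\}$ indicates whether $e$ is a hyperedge. $\mathcal G_d(N,1/2,\kappa)$ is obtained from $\mathcal G_d(N,1/2)$ by choosing a uniformly random $\kappa$-subset $K\subseteq[N]$ and adding all $d$-subsets of $K$ as hyperedges. *)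

(* Defs.v *)
From HB Require Import structures.
From mathcomp Require Import all_boot all_order all_algebra.
From mathcomp Require Import reals exp.
From mathcomp Require Import mpoly.

Set Implicit Arguments.
Unset Strict Implicit.
Unset Printing Implicit Defensive.

Import Order.TTheory GRing.Theory Num.Theory.
Local Open Scope ring_scope.

Definition hedge (N d : nat) : finType := {e : {set 'I_N} | #|e| == d}.

Definition hgraph (N d : nat) := {ffun hedge N d -> bool}.

Definition nvars (N d : nat) : nat := #|{: hedge N d}|.

(* Evaluation of a polynomial in the variables (A_e)_e at the hypergraph G:
   variable number i stands for the indicator of the i-th hyperedge
   (in the enumeration of hedge N d). *)
Definition polyfun (R : realType) (N d : nat) (p : {mpoly R[nvars N d]})
  (G : hgraph N d) : R :=
  p.@[fun i : 'I_(nvars N d) => ((G (enum_val i) : nat)%:R : R)].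

Definition E0 (R : realType) (N d : nat) (f : hgraph N d -> R) : R :=
  (#|{: hgraph N d}|%:R)^-1 * \sum_(G : hgraph N d) f G.

Definition plant (N d : nat) (K : {set 'I_N}) (G : hgraph N d) : hgraph N d :=
  [ffun e : hedge N d => G e || (val e \subset K)].

(* Expectation under H_1: G ~ G_d(N, 1/2, kappa): K uniform among the
   kappa-subsets of [N], independent of G0 ~ G_d(N,1/2), and G = plant K G0. *)
Definition E1 (R : realType) (N d kappa : nat) (f : hgraph N d -> R) : R :=
  (#|[set K : {set 'I_N} | #|K| == kappa]|%:R)^-1 *
  \sum_(K : {set 'I_N} | #|K| == kappa) E0 (fun G => f (plant K G)).

(* kappa = N^beta, rounded down to an integer. *)
Definition kappa_of (R : realType) (N : nat) (beta : R) : nat :=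
  Num.truncn ((N%:R : R) `^ beta).

(* Main.v *)
Require Import Defs.
From HB Require Import structures.
From mathcomp Require Import all_boot all_order all_algebra.
From mathcomp Require Import reals exp sequences.
From mathcomp Require Import mpoly.
From mathcomp Require Import ring lra zify.
Import Order.TTheory GRing.Theory Num.Theory.
Local Open Scope ring_scope.
Set Implicit Arguments.
Unset Strict Implicit.
Unset Printing Implicit Defensive.

Definition sgnb (R : realType) (b : bool) : R := if b then 1 else -1.

Definition chi (R : realType) (N d : nat) (S : {set hedge N d}) (G : hgraph N d) : R :=
  \prod_(e in S) sgnb R (G e).

Definition flip (N d : nat) (e0 : hedge N d) (G : hgraph N d) : hgraph N d :=
  [ffun e => if e == e0 then ~~ G e else G e].

Lemma flipK N d (e0 : hedge N d) : involutive (flip e0).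
Proof.
move=> G; apply/ffunP => e; rewrite !ffunE.
by case: eqP => // _; rewrite negbK.
Qed.

Lemma sum_flip_neg (R : realType) N d (e0 : hedge N d) (h : hgraph N d -> R) :
  (forall G, h (flip e0 G) = - h G) -> \sum_G h G = 0.
Proof.
move=> Hh.
have E : \sum_G h G = \sum_G h (flip e0 G) := reindex_inj (inv_inj (@flipK N d e0)).
have : \sum_G h G = - \sum_G h G by rewrite {1}E -sumrN; apply: eq_bigr => G _; rewrite Hh.
move=> H; have : 2 * \sum_G h G = 0 by rewrite mulr2n mulrDl mul1r {1}H addNr.
by move/eqP; rewrite mulf_eq0 pnatr_eq0 /= => /eqP.
Qed.

Lemma sgnbN (R : realType) b : sgnb R (~~ b) = - sgnb R b.
Proof. by case: b; rewrite /sgnb ?opprK. Qed.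

Lemma chi_flip (R : realType) N d (S : {set hedge N d}) e0 G :
  e0 \in S -> chi R S (flip e0 G) = - chi R S G.
Proof.
move=> He0; rewrite /chi (bigD1 e0) //= [in RHS](bigD1 e0) //= ffunE eqxx sgnbN.
rewrite mulNr; congr (- (_ * _)); apply: eq_bigr => e /andP[_ /negbTE ne].
by rewrite ffunE ne.
Qed.

Lemma card_hg N d : #|{: hgraph N d}| = (2 ^ #|{: hedge N d}|)%N.
Proof. by rewrite card_ffun card_bool. Qed.

Lemma Z_gt0 (R : realType) N d : 0 < (#|{: hgraph N d}|%:R : R).
Proof. by rewrite card_hg ltr0n expn_gt0. Qed.

Lemma kernel (R : realType) N d (G H : hgraph N d) :
  \sum_(S : {set hedge N d}) chi R S G * chi R S H
  = #|{: hgraph N d}|%:R * (G == H)%:R.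
Proof.
have E1 : forall S, chi R S G * chi R S H = \prod_(e in S) (sgnb R (G e) * sgnb R (H e)).
  by move=> S; rewrite /chi big_split.
under eq_bigr => S _ do rewrite E1 big_mkcond /=.
have := bigA_distr (R:=R) 1 +%R (fun e => sgnb R (G e) * sgnb R (H e)) (fun _ => 1).
rewrite /= => <-.
case: eqP => [<-|/eqP neq].
  rewrite mulr1 card_hg natrX.
  rewrite (eq_bigr (fun _ => 2)); last by move=> e _; case: (G e); rewrite /sgnb ?mulrNN mulr1.
  by rewrite prodr_const.
have [e ne] : exists e, G e != H e.
  apply/existsP; apply: contraR neq => /existsPn Hall.
  by apply/eqP/ffunP => e; apply/eqP; move: (Hall e); rewrite negbK.
rewrite mulr0 (bigD1 e) //=.
suff -> : sgnb R (G e) * sgnb R (H e) + 1 = 0 by rewrite mul0r.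
by case: (G e) (H e) ne => [] [] //= _; rewrite /sgnb ?mulrN ?mulNr ?mulr1 ?mul1r addNr.
Qed.

Definition coef (R : realType) N d (f : hgraph N d -> R) (S : {set hedge N d}) : R :=
  E0 (fun G => f G * chi R S G).

Lemma expansion (R : realType) N d (f : hgraph N d -> R) G :
  f G = \sum_S coef f S * chi R S G.
Proof.
rewrite /coef /E0.
under eq_bigr => S _ do rewrite -mulrA mulr_suml.
rewrite -mulr_sumr exchange_big /=.
have K : forall H, \sum_S f H * chi R S H * chi R S G = f H * (#|{: hgraph N d}|%:R * (H == G)%:R).
  by move=> H; rewrite -kernel big_distrr /=; apply: eq_bigr => S _; rewrite mulrA.
under eq_bigr => H _ do rewrite K.
rewrite (bigD1 G) //= eqxx big1 ?addr0; last first.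
  by move=> H /negbTE ->; rewrite !mulr0.
rewrite mulr1 mulrA mulrC mulrA divff ?mul1r //.
by apply: lt0r_neq0; apply: Z_gt0.
Qed.

Lemma parseval (R : realType) N d (f : hgraph N d -> R) :
  \sum_S coef f S ^+ 2 = E0 (fun G => f G ^+ 2).
Proof.
have Z0 : (#|{: hgraph N d}|%:R : R) != 0 by apply: lt0r_neq0; apply: Z_gt0.
rewrite /coef /E0.
set z := (#|{: hgraph N d}|%:R : R).
have E : forall S, (z^-1 * \sum_G f G * chi R S G) ^+ 2 =
   z^-1 * z^-1 * \sum_G \sum_H (f G * f H) * (chi R S G * chi R S H).
  move=> S; rewrite expr2 mulrACA; congr (_ * _); rewrite mulr_suml.
  apply: eq_bigr => G _; rewrite mulr_sumr; apply: eq_bigr => H _; ring.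
under eq_bigr => S _ do rewrite E.
rewrite -mulr_sumr; rewrite exchange_big /=.
under eq_bigr => G _ do rewrite exchange_big /=.
under eq_bigr => G _ do under eq_bigr => H _ do rewrite -big_distrr /= kernel.
rewrite -mulrA; congr (_ * _).
rewrite mulr_sumr; apply: eq_bigr => G _.
rewrite (bigD1 G) //= big1 ?addr0; last first.
  by move=> H /negbTE; rewrite eq_sym => ->; rewrite !mulr0.
by rewrite eqxx mulr1 expr2; field.
Qed.

Lemma E0_ext (R : realType) N d (f g : hgraph N d -> R) : f =1 g -> E0 f = E0 g.
Proof. by move=> fg; rewrite /E0; congr (_ * _); apply: eq_bigr => G _; rewrite fg. Qed.

Lemma E0_lin (R : realType) N d (I : finType) (c : I -> R) (F : I -> hgraph N d -> R) :
  E0 (fun G => \sum_i c i * F i G) = \sum_i c i * E0 (F i).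
Proof.
rewrite /E0 exchange_big mulr_sumr; apply: eq_bigr => i _.
by rewrite -mulr_sumr mulrCA.
Qed.

Lemma E0_const1 (R : realType) N d : E0 (fun _ : hgraph N d => (1 : R)) = 1.
Proof.
rewrite /E0 sumr_const -[_ *+ _]mulr_natr mul1r mulVf //.
by apply: lt0r_neq0; apply: Z_gt0.
Qed.

Lemma E0_chi_plant (R : realType) N d (S : {set hedge N d}) (K : {set 'I_N}) :
  E0 (fun G => chi R S (plant K G)) = ([forall e in S, val e \subset K] : bool)%:R.
Proof.
case: (boolP [forall e in S, val e \subset K]) => [/forall_inP H|].
  rewrite -(E0_const1 R N d); apply: E0_ext => G.
  by rewrite /chi big1 // => e eS; rewrite ffunE H ?orbT.
case/forall_inPn => e0 e0S ne0.
rewrite /E0 (@sum_flip_neg R N d e0) ?mulr0 //.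
move=> G; rewrite -(@chi_flip R N d S e0) //; congr (chi R S _).
apply/ffunP => e; rewrite !ffunE; case: eqP => [->|//].
by rewrite (negbTE ne0) !orbF.
Qed.

Definition bS (R : realType) N d (k : nat) (S : {set hedge N d}) : R :=
  (#|[set K : {set 'I_N} | #|K| == k]|%:R)^-1 *
  \sum_(K : {set 'I_N} | #|K| == k) ([forall e in S, val e \subset K] : bool)%:R.

Lemma E1_expand (R : realType) N d k (f : hgraph N d -> R) :
  E1 k f = \sum_S coef f S * bS R k S.
Proof.
rewrite /E1 /bS.
have E : forall K, E0 (fun G => f (plant K G)) =
   \sum_S coef f S * ([forall e in S, val e \subset K] : bool)%:R.
  move=> K; rewrite (@E0_ext _ _ _ _ (fun G => \sum_S coef f S * chi R S (plant K G))); last first.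
    by move=> G; rewrite -expansion.
  by rewrite E0_lin; apply: eq_bigr => S _; rewrite E0_chi_plant.
under eq_bigr => K _ do rewrite E.
rewrite exchange_big mulr_sumr; apply: eq_bigr => S _.
by rewrite -mulr_sumr mulrCA.
Qed.

Lemma coef0 (R : realType) N d (f : hgraph N d -> R) : coef f set0 = E0 f.
Proof. by apply: E0_ext => G; rewrite /chi big_set0 mulr1. Qed.

Lemma coef_poly_high (R : realType) N d (p : {mpoly R[nvars N d]}) D (S : {set hedge N d}) :
  (msize p <= D.+1)%N -> (D < #|S|)%N -> coef (polyfun p) S = 0.
Proof.
move=> Hp HS; rewrite /coef /E0.
suff -> : \sum_G polyfun p G * chi R S G = 0 by rewrite mulr0.
under eq_bigr => G _ do rewrite /polyfun mevalE mulr_suml.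
rewrite exchange_big big1_seq // => m /andP[_ mp].
have Hm : (mdeg m < D.+1)%N := leq_trans (msize_mdeg_lt mp) Hp.
have [e0 e0S /eqP me0] : exists2 e0, e0 \in S & m (enum_rank e0) == 0%N.
  apply/exists_inP; apply: contraLR HS; rewrite negb_exists_in => /forall_inP Hall.
  rewrite -leqNgt -ltnS; apply: leq_trans Hm.
  rewrite ltnS mdegE (reindex (@enum_rank (hedge N d))) /=; last first.
    by apply: onW_bij; apply: enum_rank_bij.
  rewrite [X in (_ <= X)%N](bigID (mem S)) /=; apply: leq_trans (leq_addr _ _).
  rewrite -sum1_card; apply: leq_sum => e eS.
  by rewrite lt0n; apply: Hall.
apply: (@sum_flip_neg R N d e0) => G.
rewrite (@chi_flip R N d S e0) // mulrN; congr (- (_ * _)); congr (_ * _).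
apply: eq_bigr => i _.
case: (eqVneq i (enum_rank e0)) => [->|ne]; first by rewrite me0 !expr0.
rewrite ffunE; case: eqP => // Hv; exfalso; move/eqP: ne; apply.
by rewrite -Hv enum_valK.
Qed.

Lemma E1_le_B (R : realType) N d k D (p : {mpoly R[nvars N d]}) :
  (msize p <= D.+1)%N -> E0 (polyfun p) = 0 -> E0 (fun G => polyfun p G ^+ 2) = 1 ->
  `|E1 k (polyfun p)| <=
   (1 + \sum_(S : {set hedge N d} | (0 < #|S|)%N && (#|S| <= D)%N) bS R k S ^+ 2) / 2.
Proof.
move=> Hp H0 H1.
set P := fun S : {set hedge N d} => (0 < #|S|)%N && (#|S| <= D)%N.
rewrite E1_expand (bigID P) /= [X in _ + X]big1 ?addr0; last first.
  move=> S; rewrite /P negb_and -leqNgt -ltnNge leqn0 => /orP[/eqP /cards0_eq ->|HS].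
    by rewrite coef0 H0 mul0r.
  by rewrite (coef_poly_high Hp HS) mul0r.
apply: le_trans (ler_norm_sum _ _ _) _.
apply: (@le_trans _ _ (\sum_(S | P S) (coef (polyfun p) S ^+ 2 / 2 + bS R k S ^+ 2 / 2))).
  apply: ler_sum => S _; rewrite normrM.
  have := sqr_ge0 (`|coef (polyfun p) S| - `|bS R k S|).
  rewrite -[coef _ _ ^+ 2]real_normK ?num_real // -[bS R k S ^+ 2]real_normK ?num_real //.
  move=> h; nra.
rewrite big_split /= -!mulr_suml mulrDl; apply: lerD => //.
rewrite ler_pM2r ?invr_gt0 ?ltr0n // -H1 -parseval.
rewrite [X in _ <= X](bigID P) /= lerDl; apply: sumr_ge0 => S _; apply: sqr_ge0.
Qed.

Definition gW (R : realType) N d D (W : {set 'I_N}) : R :=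
  \sum_(S : {set hedge N d} | (0 < #|S|)%N && (#|S| <= D)%N)
     ([forall e in S, val e \subset W] : bool)%:R.

Lemma gW_ge0 (R : realType) N d D (W : {set 'I_N}) : 0 <= gW R d D W.
Proof. by apply: sumr_ge0 => S _; apply: ler0n. Qed.

Lemma forall_subI N d (S : {set hedge N d}) (K K' : {set 'I_N}) :
  [forall e in S, val e \subset K] && [forall e in S, val e \subset K'] =
  [forall e in S, val e \subset K :&: K'].
Proof.
apply/andP/forall_inP => [[/forall_inP H1 /forall_inP H2] e eS|H].
  by rewrite subsetI H1 ?H2.
by split; apply/forall_inP => e eS; have := H e eS; rewrite subsetI => /andP[].
Qed.

Lemma B_le1 (R : realType) N d k D :
  \sum_(S : {set hedge N d} | (0 < #|S|)%N && (#|S| <= D)%N) bS R k S ^+ 2 <=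
  (#|[set K : {set 'I_N} | #|K| == k]|%:R)^-2 *
  \sum_(W : {set 'I_N}) gW R d D W *
     (\sum_(K : {set 'I_N} | #|K| == k) ((W \subset K) : bool)%:R) ^+ 2.
Proof.
set a := (#|[set K : {set 'I_N} | #|K| == k]|%:R : R)^-1.
have E : forall S : {set hedge N d}, bS R k S ^+ 2 = a ^+ 2 *
   \sum_(K : {set 'I_N} | #|K| == k) \sum_(K' : {set 'I_N} | #|K'| == k)
      ([forall e in S, val e \subset K :&: K'] : bool)%:R.
  move=> S; rewrite /bS -/a exprMn; congr (_ * _); rewrite expr2 mulr_suml.
  apply: eq_bigr => K _; rewrite mulr_sumr; apply: eq_bigr => K' _.
  by rewrite -natrM mulnb forall_subI.
under eq_bigr => S _ do rewrite E.
rewrite -mulr_sumr exprVn; apply: ler_wpM2l; first by rewrite invr_ge0 exprn_ge0 // ler0n.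
rewrite exchange_big /=.
under eq_bigr => K _ do rewrite exchange_big /=.
apply: (@le_trans _ _ (\sum_(K : {set 'I_N} | #|K| == k) \sum_(K' : {set 'I_N} | #|K'| == k)
   \sum_(W : {set 'I_N}) ((W \subset K) : bool)%:R * ((W \subset K') : bool)%:R * gW R d D W)).
  apply: ler_sum => K _; apply: ler_sum => K' _.
  rewrite (bigD1 (K :&: K')) //= subsetIl subsetIr !mul1r.
  rewrite -[X in X <= _]addr0; apply: lerD => //.
  apply: sumr_ge0 => W _; apply: mulr_ge0; last exact: gW_ge0.
  by apply: mulr_ge0; apply: ler0n.
under [in leLHS]eq_bigr => K _ do rewrite exchange_big /=.
rewrite [in leLHS]exchange_big /=.
have E2 : forall W : {set 'I_N}, (\sum_(K : {set 'I_N} | #|K| == k) ((W \subset K) : bool)%:R) ^+ 2 * gW R d D W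
   = \sum_(K : {set 'I_N} | #|K| == k) \sum_(K' : {set 'I_N} | #|K'| == k)
       ((W \subset K) : bool)%:R * ((W \subset K') : bool)%:R * gW R d D W.
  move=> W; rewrite expr2 -mulrA mulr_suml; apply: eq_bigr => K _.
  rewrite mulr_suml mulr_sumr; apply: eq_bigr => K' _.
  by rewrite mulrA.
under [in leRHS]eq_bigr => W _ do rewrite mulrC E2.
by [].
Qed.

Lemma sum_ind (R : realType) (T : finType) (P Q : pred T) :
  \sum_(i | P i) ((Q i : bool)%:R : R) = (#|[set i | P i & Q i]|%:R : R).
Proof.
rewrite -sum1_card natr_sum big_mkcond [RHS]big_mkcond /=; apply: eq_bigr => i _.
by rewrite inE; case: (P i); case: (Q i).
Qed.

Lemma card_ksets N k : #|[set K : {set 'I_N} | #|K| == k]| = 'C(N, k).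
Proof. by rewrite card_draws card_ord. Qed.

Lemma cardC_ord N (W : {set 'I_N}) : #|~: W| = (N - #|W|)%N.
Proof. have := cardsC W; rewrite [X in _ = X]card_ord; lia. Qed.

Lemma card_supsets N k (W : {set 'I_N}) : (k <= N)%N ->
  #|[set K : {set 'I_N} | #|K| == k & W \subset K]| = 'C(N - #|W|, N - k).
Proof.
move=> kN.
have -> : 'C(N - #|W|, N - k) = #|[set B : {set 'I_N} | B \subset ~: W & #|B| == (N - k)%N]|.
  by rewrite cards_draws cardC_ord.
rewrite -(card_imset _ (@setC_inj _)); apply: eq_card => B.
apply/imsetP/idP => [[K]|].
  rewrite !inE => /andP[/eqP cK WK] ->; rewrite setCS WK /=.
  by rewrite cardC_ord cK.
rewrite inE => /andP[BW /eqP cB]; exists (~: B); last by rewrite setCK.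
rewrite inE -setCS setCK BW andbT cardC_ord cB.
by rewrite subKn.
Qed.

Lemma part_nat (R : realType) (T : finType) (P : pred T) (f : T -> nat) n (F : T -> R) :
  (forall x, P x -> (f x < n)%N) ->
  \sum_(x | P x) F x = \sum_(j < n) \sum_(x | P x && (f x == j)) F x.
Proof.
move=> Hf.
under [RHS]eq_bigr => j _ do rewrite big_mkcond /=.
rewrite exchange_big /= big_mkcond /=; apply: eq_bigr => x _.
case Px: (P x) => /=; last by rewrite big1.
rewrite (bigD1 (Ordinal (Hf x Px))) //= eqxx big1 ?addr0 // => j /negbTE nj.
case: eqP => // Ej; move: nj; rewrite -(inj_eq val_inj) /= -Ej eqxx //.
Qed.

Lemma ffact_le_exp n m : (n ^_ m <= n ^ m)%N.
Proof.
elim: m => [|m IH]; first by rewrite ffactn0 expn0.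
by rewrite ffactnSr expnSr leq_mul // leq_subr.
Qed.

Lemma bin_le_exp n m : ('C(n, m) <= n ^ m)%N.
Proof.
apply: leq_trans (ffact_le_exp n m); rewrite -bin_ffact.
by apply: leq_pmulr; apply: fact_gt0.
Qed.

Definition EW N d (W : {set 'I_N}) : {set hedge N d} := [set e : hedge N d | val e \subset W].

Lemma card_EW N d (W : {set 'I_N}) : (#|EW d W| <= #|W| ^ d)%N.
Proof.
apply: leq_trans (bin_le_exp #|W| d).
rewrite -cards_draws -(card_imset _ val_inj); apply: subset_leq_card.
apply/subsetP => B /imsetP[e]; rewrite !inE => eW ->; rewrite eW /=.
by case: e eW.
Qed.

Lemma gW_card (R : realType) N d D (W : {set 'I_N}) :
  gW R d D W = #|[set S : {set hedge N d} | ((0 < #|S|)%N && (#|S| <= D)%N) & S \subset EW d W]|%:R.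
Proof.
rewrite /gW sum_ind; congr ((_)%:R); apply: eq_card => S; rewrite !inE.
congr (_ && _); apply/forall_inP/subsetP => H e eS.
  by rewrite inE H.
by have := H e eS; rewrite inE.
Qed.

Lemma gW_le_pow2 (R : realType) N d D (W : {set 'I_N}) :
  gW R d D W <= (2 ^ (#|W| ^ d) : nat)%:R.
Proof.
rewrite gW_card ler_nat; apply: leq_trans (_ : (2 ^ #|EW d W| <= _)%N).
  rewrite -card_powerset; apply: subset_leq_card; apply/subsetP => S.
  by rewrite !inE => /andP[_ ->].
by rewrite leq_pexp2l // card_EW.
Qed.

Lemma bin_le_D M j D : (0 < j)%N -> (j <= D)%N -> ('C(M, j) <= M ^ D)%N.
Proof.
move=> j0 jD; case: M => [|M]; first by rewrite bin0n eqn0Ngt j0.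
apply: leq_trans (bin_le_exp _ _) _; exact: leq_pexp2l.
Qed.

Lemma gW_le_poly (R : realType) N d D (W : {set 'I_N}) :
  gW R d D W <= (D * (#|W| ^ (d * D)) : nat)%:R.
Proof.
rewrite gW_card -sum1_card natr_sum.
rewrite (@part_nat R _ _ (fun S : {set hedge N d} => #|S|) D.+1); last by move=> S; rewrite inE => /andP[/andP[_ ?] _].
apply: (@le_trans _ _ (\sum_(j < D.+1) ((0 < j)%N%:R * (#|W| ^ (d * D))%N%:R))).
  apply: ler_sum => j _.
  case: (posnP j) => [j0|jpos].
    rewrite big1 ?mul0r // => S /andP[]; rewrite inE => /andP[/andP[S0 _] _] /eqP.
    by rewrite j0 => HS; move: S0; rewrite HS.
  rewrite mul1r.
  apply: (@le_trans _ _ (#|[set S : {set hedge N d} | S \subset EW d W & #|S| == j]|%:R)).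
    rewrite -sum1_card natr_sum big_mkcond [X in _ <= X]big_mkcond /=.
    apply: ler_sum => S _; rewrite !inE.
    case: ifP => [/andP[/andP[_ H1] H2]|_]; first by rewrite H1 H2.
    by case: ifP => _; rewrite ?ler01 ?lexx.
  rewrite (cards_draws (EW d W) j) ler_nat expnM.
  apply: leq_trans (bin_le_D _ jpos (ltn_ord j : (j < D.+1)%N)) _.
  rewrite leq_exp2r ?card_EW //.
  by apply: leq_trans jpos _; rewrite -ltnS.
rewrite big_ord_recl /= mul0r add0r.
under eq_bigr => i _ do rewrite mul1r.
by rewrite sumr_const card_ord -[_ *+ _]mulr_natr -natrM mulnC.
Qed.

Lemma bin_identity N k w : (w <= k)%N -> (k <= N)%N ->
  ('C(N, w) * 'C(N - w, k - w) = 'C(N, k) * 'C(k, w))%N.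
Proof.
move=> wk kN.
have h1 := bin_fact (leq_sub2r w kN).
have h2 := bin_fact (leq_trans wk kN).
have h3 := bin_fact kN.
have h4 := bin_fact wk.
have e : (N - w - (k - w) = N - k)%N by lia.
rewrite e in h1.
have P : (0 < w`! * (k - w)`! * (N - k)`!)%N by rewrite !muln_gt0 !fact_gt0.
apply/eqP; rewrite -(eqn_pmul2r P); apply/eqP.
set A := 'C(N, w) in h2 *; set X := 'C(N - w, k - w) in h1 *.
set B := 'C(N, k) in h3 *; set c := 'C(k, w) in h4 *.
rewrite -h1 in h2; rewrite -h4 in h3.
have H : (A * (w`! * (X * ((k - w)`! * (N - k)`!))) = B * (c * (w`! * (k - w)`!) * (N - k)`!))%N.
  by rewrite h2 h3.
move: H; set u := w`!; set v := (k - w)`!; set t := (N - k)`!.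
move=> H; nia.
Qed.

Lemma ffact_ratio k N w : (k <= N)%N -> (k ^_ w * N ^ w <= N ^_ w * k ^ w)%N.
Proof.
move=> kN; elim: w => [|w IH]; first by rewrite !ffactn0 !expn0.
rewrite !ffactnSr !expnSr.
have H : ((k - w) * N <= (N - w) * k)%N by nia.
have := leq_mul IH H.
by rewrite mulnACA [X in (_ <= X)%N -> _]mulnACA.
Qed.

Lemma ratio_nat N k w : (k <= N)%N ->
  ('C(N, w) * 'C(N - w, N - k) ^ 2 * N ^ w <= 'C(N, k) ^ 2 * k ^ (2 * w))%N.
Proof.
move=> kN; case: (leqP w k) => [wk|kw]; last first.
  case: (leqP w N) => [wN|Nw]; last by rewrite (bin_small Nw).
  by rewrite (@bin_small (N - w) (N - k)) //; lia.
have e : (N - w - (k - w) = N - k)%N by lia.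
rewrite -e bin_sub; last by lia.
have I := bin_identity wk kN.
set A := 'C(N, w) in I *; set X := 'C(N - w, k - w) in I *.
set B := 'C(N, k) in I *; set c := 'C(k, w) in I *.
have key : (c * c * N ^ w <= A * k ^ (2 * w))%N.
  have F1 := bin_ffact k w; have F2 := bin_ffact N w.
  have F3 := ffact_ratio w kN.
  have F4 : (c <= k ^ w)%N := bin_le_exp k w.
  have P : (0 < w`!)%N := fact_gt0 w.
  rewrite -(leq_pmul2r P).
  have : (c * (c * w`!) * N ^ w <= A * w`! * k ^ (2 * w))%N.
    rewrite /c F1 -/c /A F2 mul2n -addnn expnD.
    apply: leq_trans (_ : k ^ w * (k ^_ w * N ^ w) <= _)%N.
      by rewrite -mulnA leq_mul2r F4 orbT.
    by rewrite [X in (_ <= X)%N]mulnCA leq_mul2l F3 orbT.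
  move=> h.
  rewrite (_ : c * c * N ^ w * w`! = c * (c * w`!) * N ^ w)%N; last by nia.
  rewrite (_ : A * k ^ (2 * w) * w`! = A * w`! * k ^ (2 * w))%N //; nia.
have APos : (0 < A)%N by rewrite bin_gt0; apply: leq_trans kN.
rewrite -(leq_pmul2l APos).
have := leq_mul (leqnn (B * B)) key.
move=> h.
rewrite (_ : A * (A * X ^ 2 * N ^ w) = B * B * (c * c * N ^ w))%N; last first.
  have I2 : (A * X * (A * X) * N ^ w = B * c * (B * c) * N ^ w)%N by rewrite I.
  nia.
apply: leq_trans h _.
rewrite (_ : B * B * (A * k ^ (2 * w)) = A * (B ^ 2 * k ^ (2 * w)))%N //; nia.
Qed.

Lemma div_bound (R : realType) (A Nn X K : R) : 0 < A -> 0 < Nn ->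
  X * Nn <= A * K -> A^-1 * X <= K / Nn.
Proof.
move=> A0 N0 h.
have c0 : 0 <= A^-1 / Nn by apply: divr_ge0; rewrite ?invr_ge0 ltW.
have := ler_wpM2l c0 h.
have -> : A^-1 / Nn * (X * Nn) = A^-1 * X.
  by field; rewrite !lt0r_neq0.
have -> : A^-1 / Nn * (A * K) = K / Nn.
  by field; rewrite !lt0r_neq0.
by [].
Qed.

Lemma term_bound (R : realType) N k w : (0 < N)%N -> (k <= N)%N ->
  (('C(N, k))%:R ^+ 2)^-1 * (('C(N, w) * 'C(N - w, N - k) ^ 2)%N%:R : R)
  <= ((k%:R : R) ^+ 2 / N%:R) ^+ w.
Proof.
move=> N0 kN.
rewrite expr_div_n -exprM; apply: div_bound.
- by rewrite exprn_gt0 // ltr0n bin_gt0.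
- by rewrite exprn_gt0 // ltr0n.
have := ratio_nat w kN; rewrite -(ler_nat R) !natrM !natrX.
by rewrite expr2.
Qed.

Lemma B_le2 (R : realType) N d k D (Gf : nat -> R) : (0 < N)%N -> (k <= N)%N ->
  (forall W : {set 'I_N}, gW R d D W <= Gf #|W|) -> (forall w, 0 <= Gf w) ->
  \sum_(S : {set hedge N d} | (0 < #|S|)%N && (#|S| <= D)%N) bS R k S ^+ 2 <=
  \sum_(w < N.+1) Gf w * (((k%:R : R) ^+ 2 / N%:R) ^+ w).
Proof.
move=> N0 kN HG HG0.
apply: (@le_trans _ _ _ _ _ (@B_le1 R N d k D)).
rewrite card_ksets.
under eq_bigr => W _ do rewrite sum_ind card_supsets //.
rewrite (@part_nat R _ predT (fun W : {set 'I_N} => #|W|) N.+1); last first.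
  by move=> W _; rewrite ltnS; apply: leq_trans (max_card _) _; rewrite card_ord.
rewrite mulr_sumr; apply: ler_sum => w _.
apply: (@le_trans _ _ (('C(N, k)%:R ^+ 2)^-1 *
   \sum_(W : {set 'I_N} | #|W| == w) Gf w * ('C(N - w, N - k)%:R ^+ 2))).
  rewrite -exprVn; apply: ler_wpM2l; first by rewrite exprn_ge0 // invr_ge0 ler0n.
  apply: ler_sum => W /= /eqP Ww; rewrite Ww.
  apply: ler_wpM2r; first exact: sqr_ge0.
  by rewrite -Ww; apply: HG.
rewrite sumr_const.
have -> : #|(fun i : {set 'I_N} => eqn #|i| w)| = 'C(N, w).
  transitivity #|[set W : {set 'I_N} | #|W| == w]|; last by rewrite card_draws card_ord.
  by apply: eq_card => W; rewrite inE.
have := term_bound R w N0 kN; rewrite natrM natrX => h.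
rewrite -[_ *+ 'C(N, w)]mulr_natr.
set A := ('C(N, k)%:R : R); set c2 := ('C(N - w, N - k)%:R : R) ^+ 2.
rewrite (_ : A ^- 2 * (Gf w * c2 * 'C(N, w)%:R) = Gf w * ((A ^+ 2)^-1 * ('C(N, w)%:R * c2))); last by ring.
by apply: ler_wpM2l; [exact: HG0 | exact: h].
Qed.

Lemma ln_le_lin (R : realType) (y k0 : R) : 0 < y -> 0 < k0 ->
  ln y <= y / k0 - 1 + ln k0.
Proof.
move=> y0 k00.
have h := expR_ge1Dx (ln y - ln k0).
rewrite expRD expRN !lnK ?posrE // in h.
by lra.
Qed.

Lemma exists_w0 (R : realType) (eps c a : R) : 0 < eps -> 0 <= a ->
  exists w0 : nat, (0 < w0)%N /\
    forall w : nat, (w0 <= w)%N -> c + a * ln (w%:R : R) <= eps * w%:R.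
Proof.
move=> e0 a0.
set k0 := 2 * a / eps + 1.
have k00 : 0 < k0 by rewrite /k0; apply: ltr_pwDr => //; apply: divr_ge0 => //; [nra | lra].
set c1 := c + a * (ln k0 - 1).
set T := 2 * `|c1| / eps.
have T0 : 0 <= T by apply: divr_ge0; [rewrite mulr_ge0 // | lra].
exists (Num.truncn T).+1; split => // w hw.
have wT : T < w%:R.
  have := truncn_itv T0 => /andP[_ h2]; apply: lt_le_trans h2 _; by rewrite ler_nat.
have w0 : 0 < (w%:R : R) by apply: le_lt_trans wT.
have hl := ln_le_lin w0 k00.
have ak : a / k0 <= eps / 2.
  rewrite ler_pdivrMr // /k0.
  have -> : eps / 2 * (2 * a / eps + 1) = a + eps / 2 by field; rewrite lt0r_neq0.
  lra.
have h1 : a * ln w%:R <= a * (w%:R / k0) + a * (ln k0 - 1).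
  by rewrite -mulrDr; apply: ler_wpM2l => //; lra.
have h2 : a * (w%:R / k0) <= eps / 2 * w%:R.
  rewrite mulrA mulrAC; apply: ler_wpM2r => //; exact: ler0n.
have h3 : c1 <= eps / 2 * w%:R.
  have : T * (eps / 2) < w%:R * (eps / 2) by rewrite ltr_pM2r //; lra.
  have -> : T * (eps / 2) = `|c1| by rewrite /T; field; rewrite lt0r_neq0.
  have := ler_norm c1; lra.
rewrite /c1 in h3; lra.
Qed.

Lemma term_large (R : realType) (N D w d : nat) (C eps x : R) :
  (2 <= N)%N -> (1 <= w)%N -> 0 <= C -> D%:R <= C * ln (N%:R : R) ->
  0 <= x -> x <= expR (- (eps * ln (N%:R : R))) ->
  C + 2 + d%:R * C * ln (w%:R : R) <= eps * w%:R ->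
  ((D * w ^ (d * D))%N%:R : R) * x ^+ w <= (N.+1%:R)^-1.
Proof.
move=> N2 w1 C0 hD x0 hx hw.
set L := ln (N%:R : R).
have N0 : 0 < (N%:R : R) by rewrite ltr0n; apply: leq_trans N2.
have L0 : 0 <= L by apply: ln_ge0; rewrite ler1n; apply: leq_trans N2.
have w0 : 0 < (w%:R : R) by rewrite ltr0n.
have lw0 : 0 <= ln (w%:R : R) by apply: ln_ge0; rewrite ler1n.
have hX : x ^+ w <= expR (- (eps * L) * w%:R).
  rewrite expRM_natr; apply: lerXn2r => //; rewrite ?nnegrE ?expR_ge0 //.
have hDe : (D%:R : R) <= expR (C * L).
  apply: le_trans (_ : expR (D%:R) <= _); last by rewrite ler_expR.
  by have := expR_ge1Dx (D%:R : R); lra.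
have hW : ((w ^ (d * D))%N%:R : R) <= expR (d%:R * C * L * ln (w%:R : R)).
  rewrite natrX -{1}(lnK (w0 : w%:R \in Num.pos)) -expRM_natr ler_expR natrM.
  rewrite [X in _ <= X]mulrC; apply: ler_wpM2l => //; rewrite -mulrA.
  by apply: ler_wpM2l => //; exact: ler0n.
have hN : (N.+1%:R : R) <= expR (2 * L).
  rewrite -[2]/(2%:R) mulrC expRM_natr lnK ?posrE // -natrX ler_nat.
  by rewrite expnS expn1 -{1}[N]muln1 ltn_pmul2l // (leq_trans _ N2).
have e0 : expR (C * L) * expR (d%:R * C * L * ln w%:R) * expR (- (eps * L) * w%:R) * expR (2 * L) <= 1.
  rewrite -!expRD -[X in _ <= X]expR0 ler_expR.
  have -> : C * L + d%:R * C * L * ln w%:R + - (eps * L) * w%:R + 2 * L =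
     L * (C + 2 + d%:R * C * ln w%:R - eps * w%:R) by ring.
  by apply: mulr_ge0_le0 => //; lra.
rewrite -(ler_pM2r (_ : 0 < N.+1%:R)) ?ltr0n // mulVf ?lt0r_neq0 ?ltr0n //.
apply: le_trans e0; rewrite natrM.
apply: ler_pM; rewrite ?mulr_ge0 ?exprn_ge0 ?ler0n //.
apply: ler_pM; rewrite ?mulr_ge0 ?exprn_ge0 ?ler0n //.
exact: ler_pM.
Qed.

Unset Implicit Arguments.
Set Strict Implicit.

Theorem mainTheorem12 (R : realType) (d : nat) (beta C : R) :
  (0 < d)%N -> 0 < beta -> beta < 1 / 2 -> 0 < C ->
  exists (M : R) (N0 : nat), forall (N D : nat), (N0 <= N)%N ->
    (D%:R <= C * ln (N%:R : R)) ->
    forall p : {mpoly R[nvars N d]}, (msize p <= D.+1)%N ->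
      E0 (polyfun p) = 0 ->
      E0 (fun G => polyfun p G ^+ 2) = 1 ->
      `|E1 (kappa_of N beta) (polyfun p)| <= M.
Proof.
move=> d0 b0 b1 C0.
set eps := 1 - 2 * beta.
have e0 : 0 < eps by rewrite /eps; lra.
have a0 : 0 <= d%:R * C by apply: mulr_ge0; [exact: ler0n | exact: ltW].
have [w0 [w0pos Hw0]] := exists_w0 (C + 2) e0 a0.
set A := ((2 ^ (w0 ^ d))%N%:R : R).
have A0 : 0 <= A by exact: ler0n.
exists ((1 + (A *+ w0 + 1)) / 2), (maxn 2 w0).
move=> N D HN HD p Hp H0 H1.
have N2 : (2 <= N)%N by apply: leq_trans HN; rewrite leq_maxl.
have Nw0 : (w0 <= N)%N by apply: leq_trans HN; rewrite leq_maxr.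
have Npos : (0 < N)%N by apply: leq_trans N2.
set L := ln (N%:R : R).
have NR0 : 0 < (N%:R : R) by rewrite ltr0n.
have L0 : 0 <= L by apply: ln_ge0; rewrite ler1n.
set k := kappa_of N beta.
have hk : (k%:R : R) <= expR (beta * L).
  rewrite /k /kappa_of.
  have -> : (N%:R : R) `^ beta = expR (beta * L) by rewrite /powR gt_eqF.
  by rewrite truncn_le expR_ge0.
have kN : (k <= N)%N.
  have hN : expR (beta * L) <= N%:R.
    rewrite -[X in _ <= X](lnK (NR0 : N%:R \in Num.pos)) ler_expR -/L.
    by rewrite -[X in _ <= X]mul1r; apply: ler_wpM2r => //; lra.
  by have := le_trans hk hN; rewrite ler_nat.
set x := (k%:R : R) ^+ 2 / N%:R.
have x0 : 0 <= x by apply: divr_ge0; [exact: sqr_ge0 | exact: ler0n].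
have hx : x <= expR (- (eps * L)).
  have -> : expR (- (eps * L)) = expR (beta * L) ^+ 2 * expR (- L).
    by rewrite -expRM_natr -expRD /eps; congr expR; ring.
  rewrite /x expRN lnK ?posrE //.
  apply: ler_wpM2r; first by rewrite invr_ge0 ler0n.
  by apply: lerXn2r; rewrite ?nnegrE ?ler0n ?expR_ge0.
have x1 : x <= 1.
  apply: le_trans hx _; rewrite -expR0 ler_expR oppr_le0.
  by apply: mulr_ge0 => //; exact: ltW.
apply: le_trans (E1_le_B k Hp H0 H1) _.
rewrite ler_pM2r ?invr_gt0 ?ltr0n // lerD2l.
set Gf := fun w : nat => if (w < w0)%N then A else ((D * w ^ (d * D))%N%:R : R).
have HG0 : forall w, 0 <= Gf w by move=> w; rewrite /Gf; case: ifP => _ //; exact: ler0n.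
have HG : forall W : {set 'I_N}, gW R d D W <= Gf #|W|.
  move=> W; rewrite /Gf; case: ifP => Hw; last exact: gW_le_poly.
  apply: le_trans (@gW_le_pow2 R N d D W) _.
  by rewrite ler_nat leq_pexp2l // leq_exp2r // ltnW.
apply: le_trans (B_le2 Npos kN HG HG0) _.
rewrite -/x -(big_mkord xpredT (fun w => Gf w * x ^+ w)).
rewrite (@big_cat_nat _ _ _ w0 0 N.+1) //=; last by apply: leq_trans Nw0 _.
apply: lerD.
  apply: le_trans (_ : \sum_(0 <= i < w0) A <= _); last by rewrite sumr_const_nat subn0.
  apply: ler_sum_nat => i /andP[_ iw]; rewrite /Gf iw.
  by apply: ler_piMr => //; exact: exprn_ile1.
apply: le_trans (_ : \sum_(w0 <= i < N.+1) (N.+1%:R : R)^-1 <= _).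
  apply: ler_sum_nat => i /andP[wi _]; rewrite /Gf ltnNge wi /=.
  apply: (@term_large R N D i d C eps x) => //.
  - exact: leq_trans w0pos wi.
  - exact: ltW.
  - exact: Hw0.
rewrite sumr_const_nat -[_ *+ (N.+1 - w0)]mulr_natr -[X in _ <= X](@mulVf _ (N.+1%:R)) ?lt0r_neq0 ?ltr0n //.
by apply: ler_wpM2l; rewrite ?invr_ge0 ?ler0n // ler_nat leq_subr.
Qed.
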